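(* Let $\varphi(x)=a_nx^n+\cdots+a_1x+a_0\in\mathbb{C}[x]$ with $a_n\neq0$ have $n$ distinct roots $x_1,\dots,x_n$. Define numbers $b_{j,k}$ ($j=-1,0,\dots,n-1$, $k=0,\dots,n-1$) by $b_{-1,k}=0$, $$b_{n-i,0}=(n-(i-1))\,a_{n-(i-1)},\qquad i=1,\dots,n,$$ $$b_{n-i,k}=-\frac{a_{n-i}}{a_n}\,b_{n-1,k-1}+b_{n-(i+1),k-1},\qquad i=1,\dots,n,\ k=1,\dots,n-1.$$ Then the Newton sums $N_k=\sum_{i=1}^n x_i^k$ satisfy $$N_k=\frac{b_{n-1,k}}{a_n},\qquad k=0,1,\dots,n-1.$$
   Context: Equivalently, $b_{n-1,k}x^{n-1}+\cdots+b_{1,k}x+b_{0,k}$ is the unique polynomial of degree less than $n$ in the coset of $\varphi'(x)x^k$ in $R/(\varphi(x))$, where $R\subset\mathbb{C}(x)$ is the subring of rational functions $p/q$ ($p,q\in\mathbb{C}[x]$) with $q(x_i)\neq0$ at every root $x_i$ of $\varphi$, and $(\varphi(x))$ is the ideal of $R$ generated by $\varphi$. *)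

(* Defs.v *)
(* The complex numbers are modelled as R[i] = complex R
   for an arbitrary R : realType (any such R[i] is isomorphic to C). *)
From HB Require Import structures.
From mathcomp Require Import all_boot all_order all_algebra.
From mathcomp Require Import reals.
From mathcomp Require Export complex.
Set Implicit Arguments. Unset Strict Implicit. Unset Printing Implicit Defensive.
Import Order.TTheory GRing.Theory Num.Theory.
Local Open Scope ring_scope.

(* bsh a n k m  is  b_{m-1,k}  of the paper (index shifted by one so that
   m = 0 corresponds to j = -1), where a i is the coefficient a_i:
     b_{-1,k}   = 0
     b_{j,0}    = (j+1) a_{j+1}                         (j = n-i, i = 1..n)
     b_{j,k+1}  = -(a_j / a_n) b_{n-1,k} + b_{j-1,k}     (j = n-i, i = 1..n) *)
Fixpoint bsh {F : fieldType} (a : nat -> F) (n : nat) (k : nat) (m : nat) : F :=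
  match m with
  | 0 => 0
  | m'.+1 =>
      match k with
      | 0 => m'.+1%:R * a m'.+1
      | k'.+1 => - (a m' / a n) * bsh a n k' n + bsh a n k' m'
      end
  end.

Definition bcoef {F : fieldType} (a : nat -> F) (n : nat) (j : int) (k : nat) : F :=
  match j with
  | Posz j' => bsh a n k j'.+1
  | Negz _ => 0
  end.

(* Main.v *)
Require Import Defs.
From HB Require Import structures.
From mathcomp Require Import all_boot all_order all_algebra.
From mathcomp Require Import reals complex.
From mathcomp Require Import ring zify.
Set Implicit Arguments. Unset Strict Implicit. Unset Printing Implicit Defensive.
Import Order.TTheory GRing.Theory Num.Theory.
Local Open Scope ring_scope.

Section S.
Variable F : fieldType.

Lemma prod_neq_eq (I : eqType) (s : seq I) (a : I) (f : I -> {poly F}) :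
  a \notin s -> \prod_(j <- s | j != a) f j = \prod_(j <- s) f j.
Proof.
move=> Ha; rewrite big_seq_cond [RHS]big_seq; apply: eq_bigl => j.
case: (boolP (j \in s)) => js //=; apply/eqP => E; move: Ha; by rewrite -E js.
Qed.

Lemma deriv_big (I : eqType) (s : seq I) (f : I -> {poly F}) : uniq s ->
  (\prod_(j <- s) f j)^`() = \sum_(i <- s) (f i)^`() * \prod_(j <- s | j != i) f j.
Proof.
elim: s => [|a s IH] /=; first by rewrite !big_nil derivC.
move=> /andP[Has us]; rewrite big_cons derivM IH // big_cons [\prod_(j <- a :: s | _) _]big_cons eqxx /= prod_neq_eq //.
congr (_ + _); rewrite mulr_sumr !big_seq; apply: eq_bigr => i iS.
rewrite big_cons; case: eqP => [E|_]; first by move: Has; rewrite E iS.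
by rewrite mulrCA.
Qed.

Lemma bsh0 (a : nat -> F) n k : bsh a n k 0 = 0. Proof. by case: k. Qed.
Lemma bshS (a : nat -> F) n k m : bsh a n k.+1 m.+1 = - (a m / a n) * bsh a n k n + bsh a n k m.
Proof. by []. Qed.

Lemma main_gen (n : nat) (phi : {poly F}) (x : 'I_n -> F) :
  size phi = n.+1 -> injective x -> (forall i, root phi (x i)) ->
  forall k : nat, (k < n)%N ->
    \sum_(i < n) x i ^+ k
      = bcoef (fun j => phi`_j) n (Posz n - 1) k / phi`_n.
Proof.
move=> sz xinj xr.
set P := \prod_(j < n) ('X - (x j)%:P).
set c := phi`_n.
have sP : size P = n.+1 by rewrite size_prod_XsubC -[index_enum _]filter_predT deprecated_filter_index_enum -cardE card_ord.
have mP : P \is monic by apply: monic_prod_XsubC.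
have phiE : phi = c *: P.
  have [q Hq] : exists q, phi = q * \prod_(z <- [seq x i | i <- index_enum 'I_n]) ('X - z%:P).
    apply: uniq_roots_prod_XsubC; last by rewrite uniq_rootsE map_inj_uniq // index_enum_uniq.
    by apply/allP => z /mapP [i _ ->].
  rewrite big_map -/P in Hq.
  have Pn0 : P != 0 by rewrite -size_poly_eq0 sP.
  have qn0 : q != 0 by apply/eqP => q0; move: sz; rewrite Hq q0 mul0r size_poly0.
  have sq : size q = 1%N.
    by move: sz; rewrite Hq size_mul // sP addnS /= => /(congr1 (subn^~ n)); rewrite addnK subSnn.
  have qE : q = (q`_0)%:P by apply: size1_polyC; rewrite sq.
  have cE : c = q`_0.
    rewrite /c Hq {1}qE coefCM.
    have : lead_coef P = 1 by apply/monicP.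
    by rewrite /lead_coef sP /= => ->; rewrite mulr1.
  by rewrite Hq qE -cE mul_polyC.
have Pn0 : P != 0 by rewrite -size_poly_eq0 sP.
have c0 : c != 0.
  have : phi != 0 by rewrite -size_poly_eq0 sz.
  by rewrite -lead_coef_eq0 /lead_coef sz.
pose Q i := \prod_(j < n | j != i) ('X - (x j)%:P).
have F2 : forall i, ('X - (x i)%:P) * Q i = P by move=> i; rewrite /P (bigD1 i).
have F3 : forall i, (Q i)`_n.-1 = 1.
  move=> i; have E := F2 i.
  have Qn0 : Q i != 0 by apply/eqP => Q0; move: Pn0; rewrite -E Q0 mulr0 eqxx.
  have sQ : size (Q i) = n.
    move: sP; rewrite -E size_mul ?polyXsubC_eq0 // size_XsubC /=; by case.
  have : lead_coef P = 1 by apply/monicP.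
  by rewrite -E lead_coefM lead_coefXsubC mul1r /lead_coef sQ.
pose S k := c *: \sum_(i < n) x i ^+ k *: Q i.
have S0 : phi^`() = S 0.
  rewrite phiE derivZ /P deriv_big ?index_enum_uniq //; congr (c *: _).
  by apply: eq_bigr => i _; rewrite derivXsubC mul1r expr0 scale1r.
have Scoef : forall k, (S k)`_n.-1 = c * \sum_(i < n) x i ^+ k.
  move=> k; rewrite coefZ coef_sum; congr (c * _).
  by apply: eq_bigr => i _; rewrite coefZ F3 mulr1.
have Srec : forall k, S k.+1 = 'X * S k - ((S k)`_n.-1 / c) *: phi.
  move=> k; rewrite Scoef mulrAC divff // mul1r phiE.
  rewrite /S -scalerAr scalerA (mulrC _ c) -scalerA -scalerBr; congr (c *: _).
  rewrite mulr_sumr scaler_suml -sumrB; apply: eq_bigr => i _.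
  rewrite -(F2 i) exprSr -scalerA -scalerAr -scalerBr; congr (_ *: _).
  rewrite -mul_polyC; ring.
have Claim : forall k m, (m < n)%N -> (S k)`_m = bsh (fun j => phi`_j) n k m.+1.
  elim=> [|k IH] m mn.
    by rewrite -S0 coef_deriv /= mulr_natl.
  have n0 : (0 < n)%N := leq_ltn_trans (leq0n m) mn.
  have E : bsh (fun j => phi`_j) n k n = (S k)`_n.-1 by rewrite IH ?prednK // ?ltn_predL.
  rewrite Srec coefB coefXM [X in _ - X]coefZ.
  case: m mn => [|m] mn.
    rewrite eqxx bshS E bsh0 /c; ring.
  rewrite [m.+1 == 0%N]/= [m.+1.-1]/= (IH m (ltnW mn)).
  rewrite (_ : (m.+1 == 0%N) = false) // bshS E /c; ring.
move=> k kn.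
have n0 : (0 < n)%N := leq_ltn_trans (leq0n k) kn.
have -> : (Posz n - 1)%R = Posz n.-1 by rewrite -subn1 -subzn.
rewrite /= -Claim ?prednK ?ltn_predL // Scoef mulrAC divff // mul1r //.
Qed.
End S.

Theorem corollary1 (R : realType) (n : nat) (phi : {poly R[i]})
  (x : 'I_n -> R[i]) :
  size phi = n.+1 ->                       (* deg phi = n, i.e. a_n <> 0 *)
  injective x ->                           (* the x_i are distinct *)
  (forall i, root phi (x i)) ->            (* x_1..x_n are roots of phi *)
  forall k : nat, (k < n)%N ->
    \sum_(i < n) x i ^+ k
      = bcoef (fun j => phi`_j) n (Posz n - 1) k / phi`_n.
Proof. exact: (@main_gen R[i] n phi x). Qed.
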